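(* Let $\sigma=(\sigma_n)_{n\in\mathbb{N}}$ be an increasing sequence of positive integers, let $\gamma$ be a positive integer, and define $\tau_n=\sigma_{\gamma n}$. Then a nonnegative random variable $W$ is $\sigma$-summable if and only if it is $\tau$-summable.
   Context: Let $W$ be a nonnegative random variable and $\sigma=(\sigma_n)_{n\in\mathbb{N}}$ a sequence of positive integers (or reals $\ge 1$). Let $(W_n^j)_{n,j\in\mathbb{N}}$ be independent copies of $W$ and $\Lambda_n=\min_{1\le j\le\sigma_n}W_n^j$. $W$ is called $\sigma$-summable if $\Pr\{\sum_n\Lambda_n<\infty\}>0$. *)

(* Defs.v *)
From HB Require Import structures.
From mathcomp Require Import all_boot all_order all_algebra.
From mathcomp Require Import all_classical all_reals all_analysis.
Set Implicit Arguments. Unset Strict Implicit. Unset Printing Implicit Defensive.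
Import Order.TTheory GRing.Theory Num.Theory.
Local Open Scope classical_set_scope.
Local Open Scope ring_scope.

Definition mutually_independent d (T : measurableType d) (R : realType)
  (P : probability T R) (I : eqType) (X : I -> T -> R) : Prop :=
  forall (s : seq I) (B : I -> set R),
    uniq s -> (forall i, i \in s -> measurable (B i)) ->
    P (\bigcap_(i in [set` s]) (X i @^-1` B i)) =
    (\prod_(i <- s) P (X i @^-1` B i))%E.

Definition same_distribution d d' (T : measurableType d) (T' : measurableType d')
  (R : realType) (P : probability T R) (Q : probability T' R)
  (Y : T -> R) (W : T' -> R) : Prop :=
  forall B : set R, measurable B -> P (Y @^-1` B) = Q (W @^-1` B).

(* Lambda_n = min_{1 <= j <= sigma_n} W_n^j ; copies indexed here by
   j = 0, ..., sigma_n - 1 (the seed X (n,0) is itself among them when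
   sigma_n >= 1). *)
Definition Lambda (T : Type) (R : realType) (X : nat * nat -> T -> R)
  (sigma : nat -> nat) (n : nat) (w : T) : R :=
  \big[Num.min/X (n, 0%N) w]_(j < sigma n) X (n, nat_of_ord j) w.

(* sigma-summability, computed with the family X of independent copies of W:
   Pr { sum_n Lambda_n < oo } > 0. *)
Definition summable_for d (T : measurableType d) (R : realType)
  (P : probability T R) (X : nat * nat -> T -> R) (sigma : nat -> nat) : Prop :=
  (0 < P [set w | (\sum_(0 <= n <oo) (Lambda X sigma n w)%:E < +oo)%E])%E.

(* Main.v *)
Require Import Defs.
From HB Require Import structures.
From mathcomp Require Import all_boot all_order all_algebra.
From mathcomp Require Import all_classical all_reals all_analysis.
From mathcomp Require Import measurable_realfun measurable_fun_approximation.
Import Order.TTheory GRing.Theory Num.Theory.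
Local Open Scope classical_set_scope.
Local Open Scope ring_scope.
Local Open Scope ereal_scope.
Lemma cvg_of_einf_esup (R : realType) (u : (\bar R)^nat) :
  limn_esup u <= limn_einf u -> cvgn u.
Proof.
move=> h.
have e : limn_einf u = limn_esup u by apply/le_anti; rewrite h limn_einf_sup.
apply/cvg_ex; exists (limn_esup u).
apply: (@squeeze_cvge _ _ _ _ (einfs u) u (esups u)).
- apply: nearW => n; apply/andP; split.
  + by apply: ereal_inf_lbound; exists n => /=.
  + by apply: ereal_sup_ubound; exists n => /=.
- rewrite -e limn_einf_lim; have := @is_cvg_einfs _ u; move=> /cvg_ex[l hl]; by rewrite (cvg_lim _ hl).
- rewrite limn_esup_lim; have := @is_cvg_esups _ u; move=> /cvg_ex[l hl]; by rewrite (cvg_lim _ hl).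
Qed.
Arguments cvg_of_einf_esup {R u}.
Lemma ev_measurable d (T : measurableType d) (R : realType) (f : nat -> T -> R) :
  (forall n, measurable_fun setT (f n)) ->
  measurable [set w | \sum_(0 <= n <oo) (f n w)%:E < +oo].
Proof.
move=> mf.
pose s w N := (\sum_(0 <= n < N) (f n w)%:E)%E.
have ms : forall N, measurable_fun setT (fun w => s w N).
  move=> N; apply: emeasurable_sum => n; exact/measurable_EFinP.
have mls : measurable_fun setT (fun w => limn_esup (s w)).
  exact: (measurable_fun_limn_esup (f := fun N w => s w N)).
have mli : measurable_fun setT (fun w => limn_einf (s w)).
  rewrite /limn_einf; apply: measurableT_comp => //.
  apply: (measurable_fun_limn_esup (f := fun N w => - s w N)) => N.
  exact: measurableT_comp.
have -> : [set w | \sum_(0 <= n <oo) (f n w)%:E < +oo] =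
  ([set w | limn_esup (s w) <= limn_einf (s w)] `&` [set w | limn_esup (s w) < +oo])
  `|` (~` [set w | limn_esup (s w) <= limn_einf (s w)] `&` [set w | (point : \bar R) < +oo]).
  apply/seteqP; split => w /=;
    have -> : (\sum_(0 <= n <oo) (f n w)%:E)%E = limn (s w) by [].
  -     case: (boolP (limn_esup (s w) <= limn_einf (s w))) => h.
      by rewrite -(is_cvg_limn_esupE (cvg_of_einf_esup h)) => ?; left.
    rewrite dvgP; first by move=> ?; right.
    move=> /cvg_ex[l hl]; move: h; have [-> ->] := cvg_limn_einf_sup hl.
    by rewrite lexx.
  -     case=> -[h1 h2].
      by rewrite -(is_cvg_limn_esupE (cvg_of_einf_esup h1)).
    rewrite dvgP// => /cvg_ex[l hl]; apply: h1.
    by have [-> ->] := cvg_limn_einf_sup hl.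
apply: measurableU; apply: measurableI.
- by rewrite -[X in measurable X]setTI; exact: measurable_lee.
- rewrite -[X in measurable X]setTI.
  apply: (@measurable_lte _ _ _ setT measurableT _ (fun=> +oo)) => //.
- apply: measurableC.
  by rewrite -[X in measurable X]setTI; exact: measurable_lee.
- by case: (pselect ((point : \bar R) < +oo)) => h;
    [rewrite (_ : [set _ | _] = setT) //; apply/seteqP; split => //
    |rewrite (_ : [set _ | _] = set0) //; apply/seteqP; split].
Qed.
Definition Fn (R : realType) := (nat * nat -> R)%type.
HB.instance Definition _ (R : realType) := gen_eqMixin (Fn R).
HB.instance Definition _ (R : realType) := gen_choiceMixin (Fn R).
HB.instance Definition _ (R : realType) := isPointed.Build (Fn R) (fun _ => 0%R).

Definition cyl {R : realType} (s : seq (nat * nat)) (B : nat * nat -> set R)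
  : set (Fn R) := [set u | forall i, i \in s -> B i (u i)].

Definition Cyl (R : realType) (S : set (nat * nat)) : set (set (Fn R)) :=
  [set A | exists s B, (forall i, i \in s -> S i) /\
     (forall i, measurable (B i)) /\ A = cyl s B].

Notation Om R := (g_sigma_algebraType (Cyl R setT)).
Notation OmS R S := (g_sigma_algebraType (Cyl R S)).
Lemma cyl_nil (R : realType) (B : nat * nat -> set R) : cyl [::] B = setT.
Proof. by apply/seteqP; split => u // _ i; rewrite in_nil. Qed.

Lemma cyl_cons (R : realType) i s (B : nat * nat -> set R) :
  cyl (i :: s) B = [set u | B i (u i)] `&` cyl s B.
Proof.
apply/seteqP; split => u /=.
  by move=> h; split; [apply: h; rewrite mem_head|move=> j js; apply: h; rewrite in_cons js orbT].
by move=> [h1 h2] j; rewrite in_cons => /orP[/eqP->//|]; exact: h2.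
Qed.

Lemma Cyl_setI (R : realType) S : setI_closed (Cyl R S).
Proof.
move=> A A' [s1 [B1 [hs1 [mB1 ->]]]] [s2 [B2 [hs2 [mB2 ->]]]].
exists (s1 ++ s2), (fun i => (if i \in s1 then B1 i else setT) `&` (if i \in s2 then B2 i else setT)).
split; first by move=> i; rewrite mem_cat => /orP[/hs1|/hs2].
split; first by move=> i; apply: measurableI; case: ifP.
apply/seteqP; split => u /=.
  move=> [h1 h2] i hi; split; case: ifP => // his; [exact: h1|exact: h2].
move=> h; split => i hi; have := h i; rewrite mem_cat hi ?orbT => /(_ isT)[] a b //.
Qed.

Lemma Cyl_T (R : realType) S : Cyl R S setT.
Proof. by exists [::], (fun=> setT); split => //; split => //; rewrite cyl_nil. Qed.

Lemma Cyl_sub (R : realType) (S S' : set (nat * nat)) : S `<=` S' -> Cyl R S `<=` Cyl R S'.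
Proof. by move=> SS' A [s [B [hs [mB ->]]]]; exists s, B; split => // i /hs /SS'. Qed.

Lemma preimage_cyl_meas d (T : measurableType d) (R : realType) (F : T -> Fn R) s B :
  (forall i, i \in s -> measurable_fun setT (fun w => F w i)) ->
  (forall i, measurable (B i)) ->
  measurable (F @^-1` cyl s B).
Proof.
elim: s => [|i s IH] hF mB; first by rewrite cyl_nil preimage_setT.
rewrite cyl_cons preimage_setI; apply: measurableI.
  have := hF i (mem_head _ _) measurableT (B i) (mB i).
  by rewrite setTI.
by apply: IH => // j js; apply: hF; rewrite in_cons js orbT.
Qed.

Lemma meas_to_OmS d (T : measurableType d) (R : realType) S (F : T -> OmS R S) :
  (forall i, S i -> measurable_fun setT (fun w => F w i)) ->
  measurable_fun setT F.
Proof.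
move=> hF; apply: (@measurability _ _ T (OmS R S) setT F (Cyl R S) erefl).
move=> _ [A [s [B [hs [mB ->]]]] <-]; rewrite setTI.
by apply: preimage_cyl_meas => // i /hs; exact: hF.
Qed.

Lemma coord_meas (R : realType) S i : S i ->
  measurable_fun (setT : set (OmS R S)) (fun u => u i).
Proof.
move=> Si _ Y mY; rewrite setTI; apply: sub_sigma_algebra.
exists [:: i], (fun=> Y); split; first by move=> j; rewrite mem_seq1 => /eqP->.
split => //; apply/seteqP; split => u /=.
  by move=> h j; rewrite mem_seq1 => /eqP->.
by move=> /(_ i (mem_head _ _)).
Qed.
Lemma bigmin_le_x0 (R : realType) (x0 : R) k (f : nat -> R) :
  (\big[Num.min/x0]_(j < k) f j <= x0)%R.
Proof.
elim: k f => [|k IH] f; first by rewrite big_ord0.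
rewrite big_ord_recl ge_min; apply/orP; right; exact: (IH (fun j => f j.+1)).
Qed.

Lemma bigmin_le (R : realType) (x0 : R) k' (f : nat -> R) k : (k <= k')%N ->
  (\big[Num.min/x0]_(j < k') f j <= \big[Num.min/x0]_(j < k) f j)%R.
Proof.
elim: k' f k => [|k' IH] f k; first by rewrite leqn0 => /eqP->.
case: k => [_|k]; first by rewrite big_ord0 bigmin_le_x0.
rewrite ltnS => h; rewrite !big_ord_recl le_min !ge_min lexx /=.
apply/orP; right; exact: (IH (fun j => f j.+1) k h).
Qed.

Lemma bigmin_ge0 (R : realType) (x0 : R) k (f : nat -> R) : (0 <= x0)%R ->
  (forall j, 0 <= f j)%R -> (0 <= \big[Num.min/x0]_(j < k) f j)%R.
Proof.
move=> h0; elim: k f => [|k IH] f hf; first by rewrite big_ord0.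
rewrite big_ord_recl le_min hf /=; exact: (IH (fun j => f j.+1)).
Qed.

Lemma regroup (R : realType) (f : nat -> \bar R) g N : (0 < g)%N ->
  (forall n, 0 <= f n) ->
  \sum_(0 <= n < N) f n <= \sum_(0 <= r < g) \sum_(0 <= k < N) f (g * k + r)%N.
Proof.
move=> g0 f0.
have e : forall M, \sum_(0 <= n < g * M) f n = \sum_(0 <= k < M) \sum_(0 <= r < g) f (g * k + r)%N.
  elim=> [|M IH]; first by rewrite muln0 !big_geq.
  rewrite big_nat_recr // -IH mulnS (big_cat_nat (n := (g * M)%N)) ?leq_addl //=.
  congr (_ + _); rewrite -{1}(add0n (g * M)%N) big_addn.
  rewrite addnK; apply: eq_bigr => r _; by rewrite addnC.
rewrite exchange_big_nat -e.
rewrite [X in _ <= X](big_cat_nat (n := N)) ?leq_pmull //=.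
by rewrite leeDl // sume_ge0.
Qed.

Lemma sum_blocks (R : realType) (a : nat -> R) (b : nat -> nat -> R) g : (0 < g)%N ->
  (forall n, 0 <= a n)%R -> (forall r k, 0 <= b r k)%R ->
  (forall n, a n <= b (n %% g)%N (n %/ g)%N)%R ->
  (forall r, (r < g)%N -> \sum_(0 <= k <oo) (b r k)%:E < +oo) ->
  \sum_(0 <= n <oo) (a n)%:E < +oo.
Proof.
move=> g0 a0 b0 ab bf.
apply: (le_lt_trans (y := \sum_(0 <= r < g) \sum_(0 <= k <oo) (b r k)%:E)).
  apply: lime_le; first by apply: is_cvg_nneseries => n _ _; rewrite lee_fin.
  apply: nearW => N /=.
  apply: (le_trans (y := \sum_(0 <= n < N) (b (n %% g)%N (n %/ g)%N)%:E)).
    by apply: lee_sum => n _; rewrite lee_fin.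
  have bge0 : forall n, 0 <= (b (n %% g)%N (n %/ g)%N)%:E by move=> n; rewrite lee_fin.
  apply: (le_trans (@regroup R (fun n => (b (n %% g)%N (n %/ g)%N)%:E) g N g0 bge0)).
  rewrite big_seq [leRHS]big_seq; apply: lee_sum => r; rewrite mem_index_iota => /andP[_ rg].
  apply: le_trans (nneseries_lim_ge N _) => [|n _ _]; last by rewrite lee_fin.
  apply: lee_sum => k _.
  by rewrite -modnDml mulnC modnMl add0n modn_small // divnMDl // divn_small // addn0.
rewrite big_seq; apply: lte_sum_pinfty => r.
by rewrite mem_index_iota => /andP[_ rg]; exact: bf.
Qed.
Section main.
Context (R : realType) (d' : measure_display) (T' : measurableType d')
  (Q : probability T' R) (W : {RV Q >-> R})
  (d : measure_display) (T : measurableType d) (P : probability T R)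
  (X : nat * nat -> {RV P >-> R}).
Hypothesis hind : mutually_independent P (fun ij => (X ij : T -> R)).
Hypothesis hcopy : forall ij, same_distribution P Q (X ij) W.

Definition Xe (e : nat * nat -> nat * nat) : T -> Fn R := fun w i => X (e i) w.

Lemma Xe_meas e S : measurable_fun setT (Xe e : T -> OmS R S).
Proof. by apply: meas_to_OmS => i _; exact: measurable_funP. Qed.

Lemma cyl_prob (e : nat * nat -> nat * nat) : injective e ->
  forall s B, (forall i, measurable (B i)) ->
  P (Xe e @^-1` cyl s B) = (\prod_(i <- undup s) Q (W @^-1` B i))%E.
Proof.
move=> inj s B mB.
pose B' j := [set x | forall i, e i = j -> B i x].
have B'e i : B' (e i) = B i.
  apply/seteqP; split => x /=; first by move=> /(_ i erefl).
  by move=> h i' /inj ->.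
have mB' j : measurable (B' j).
  case: (pselect (exists i, e i = j)) => [[i <-]|nj]; first by rewrite B'e.
  rewrite (_ : B' j = setT) //; apply/seteqP; split => x //= _ i ei.
  by exfalso; apply: nj; exists i.
have -> : Xe e @^-1` cyl s B =
    \bigcap_(j in [set` map e (undup s)]) ((X j : T -> R) @^-1` B' j).
  apply/seteqP; split => w /=.
    move=> h j /= /mapP[i]; rewrite mem_undup => is_ -> i' /inj ->.
    exact: h.
  move=> h i is_; have := h (e i); rewrite B'e; apply => /=.
  by apply: map_f; rewrite mem_undup.
rewrite hind; last 2 first.
- by rewrite map_inj_uniq ?undup_uniq.
- by move=> j _; exact: mB'.
rewrite big_map; apply: eq_bigr => i _; rewrite B'e.
exact: hcopy.
Qed.

Lemma law_eq (e : nat * nat -> nat * nat) : injective e ->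
  forall A : set (Om R), measurable A -> P (Xe e @^-1` A) = P (Xe id @^-1` A).
Proof.
move=> inj A mA.
pose Y1 : {mfun T >-> Om R} := HB.pack (Xe e : T -> Om R)
  (isMeasurableFun.Build _ _ _ _ (Xe e : T -> Om R) (Xe_meas e setT)).
pose Y2 : {mfun T >-> Om R} := HB.pack (Xe id : T -> Om R)
  (isMeasurableFun.Build _ _ _ _ (Xe id : T -> Om R) (Xe_meas id setT)).
have := @measure_unique _ R (Om R) (Cyl R setT) (fun=> setT) erefl (@Cyl_setI R setT)
  (fun=> Cyl_T R setT) _ (distribution P Y1) (distribution P Y2) _ _ A mA.
apply.
- by apply/seteqP; split => // x _; exists 0%N.
- move=> _ [s [B [_ [mB ->]]]].
  change (P (Xe e @^-1` cyl s B) = P (Xe id @^-1` cyl s B)).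
  by rewrite (@cyl_prob e inj)// (@cyl_prob id (@inj_id _))//.
- move=> _; change (P (Xe e @^-1` setT) < +oo)%E.
  rewrite preimage_setT probability_setT.
  exact: ltry.
Qed.

Definition Y0 : {mfun T >-> Om R} := HB.pack (Xe id : T -> Om R)
  (isMeasurableFun.Build _ _ _ _ (Xe id : T -> Om R) (Xe_meas id setT)).
Definition mu := distribution P Y0.
Lemma muE A : mu A = P (Xe id @^-1` A). Proof. by []. Qed.

Lemma mu_fin A : measurable (A : set (Om R)) -> mu A \is a fin_num.
Proof.
move=> mA; rewrite muE ge0_fin_numE ?measure_ge0//.
apply: (le_lt_trans (probability_le1 _ _)); last exact: ltry.
by have := Xe_meas id setT measurableT A mA; rewrite setTI.
Qed.

Lemma sub_Om S A : <<s Cyl R S >> A -> measurable (A : set (Om R)).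
Proof. move=> h; change (<<s Cyl R setT >> A); exact: (sub_sigma_algebra2 (@Cyl_sub R S setT (@subsetT _ S)) h). Qed.

Lemma cyl_mul S1 S2 (disj : forall i, S1 i -> S2 i -> False) s1 B1 s2 B2 :
  (forall i, i \in s1 -> S1 i) -> (forall i, i \in s2 -> S2 i) ->
  (forall i, measurable (B1 i)) -> (forall i, measurable (B2 i)) ->
  mu (cyl s1 B1 `&` cyl s2 B2) = (mu (cyl s1 B1) * mu (cyl s2 B2))%E.
Proof.
move=> h1 h2 mB1 mB2.
have dj i : i \in s1 -> i \in s2 = false.
  by move=> is1; apply/negP => is2; exact: (disj i (h1 _ is1) (h2 _ is2)).
have -> : cyl s1 B1 `&` cyl s2 B2 =
    cyl (s1 ++ s2) (fun i => if i \in s1 then B1 i else B2 i).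
  apply/seteqP; split => u /=.
    move=> [c1 c2] i; rewrite mem_cat; case: ifP => [is1 _|_ /= is2].
      exact: c1.
    exact: c2.
  move=> h; split => i hi; have := h i; rewrite mem_cat hi ?orbT => /(_ isT).
    by [].
  by case: ifP => // is1; rewrite (dj _ is1) in hi.
rewrite !muE !(@cyl_prob id (@inj_id _))//; last by move=> i; case: ifP.
rewrite undup_cat big_cat /=; congr (_ * _)%E.
  rewrite (_ : [seq x <- undup s1 | x \notin s2] = undup s1); last first.
    apply/all_filterP/allP => i; rewrite mem_undup => is1.
    by rewrite (dj _ is1).
  by apply: eq_big_seq => i; rewrite mem_undup => ->.
apply: eq_big_seq => i; rewrite mem_undup => is2.
by case: ifP => // is1; rewrite (dj _ is1) in is2.
Qed.

Lemma indep_a S1 S2 (disj : forall i, S1 i -> S2 i -> False) A2 :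
  Cyl R S2 A2 -> forall A1, <<s Cyl R S1 >> A1 ->
  mu (A1 `&` A2) = (mu A1 * mu A2)%E.
Proof.
move=> cA2 A1 hA1.
have mA2 : measurable (A2 : set (Om R)) by apply: (@sub_Om S2); exact: sub_sigma_algebra.
pose r := NngNum (fine_ge0 (measure_ge0 mu A2)).
have cov : \bigcup_(k : nat) (setT : set (Om R)) = setT.
  by rewrite bigcup_const//; exists 0%N.
have m1m2 : forall A, Cyl R S1 A -> mrestr mu mA2 A = mscale r mu A.
  move=> _ [s1 [B1 [hs1 [mB1 ->]]]]; case: cA2 => [s2 [B2 [hs2 [mB2 eA2]]]].
  rewrite /mrestr /mscale /r /= fineK ?mu_fin// eA2.
  rewrite (@cyl_mul S1 S2 disj s1 B1 s2 B2 hs1 hs2 mB1 mB2); exact: muleC.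
have m1goo : forall k : nat, mrestr mu mA2 setT < +oo.
  by move=> k; rewrite /mrestr setTI ltey_eq mu_fin.
have := @g_sigma_algebra_measure_unique _ R (Om R) (Cyl R S1)
  (fun A hA => @sub_Om S1 A (sub_sigma_algebra hA)) (fun=> setT) (fun=> Cyl_T R S1) cov
  (mrestr mu mA2) (mscale r mu) (@Cyl_setI R S1) m1m2 m1goo A1 hA1.
move=> h; transitivity (mscale r mu A1); first exact: h.
rewrite /mscale /r /= fineK ?mu_fin//; exact: muleC.
Qed.

Lemma indep S1 S2 (disj : forall i, S1 i -> S2 i -> False) A1 A2 :
  <<s Cyl R S1 >> A1 -> <<s Cyl R S2 >> A2 ->
  mu (A1 `&` A2) = (mu A1 * mu A2)%E.
Proof.
move=> hA1 hA2.
have mA1 : measurable (A1 : set (Om R)) by apply: (@sub_Om S1).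
pose r := NngNum (fine_ge0 (measure_ge0 mu A1)).
have cov : \bigcup_(k : nat) (setT : set (Om R)) = setT.
  by rewrite bigcup_const//; exists 0%N.
have m1m2 : forall A, Cyl R S2 A -> mrestr mu mA1 A = mscale r mu A.
  move=> A cA; rewrite /mrestr /mscale /r /= fineK ?mu_fin// setIC.
  exact: (@indep_a S1 S2 disj A cA A1 hA1).
have m1goo : forall k : nat, mrestr mu mA1 setT < +oo.
  by move=> k; rewrite /mrestr setTI ltey_eq mu_fin.
have := @g_sigma_algebra_measure_unique _ R (Om R) (Cyl R S2)
  (fun A hA => @sub_Om S2 A (sub_sigma_algebra hA)) (fun=> setT) (fun=> Cyl_T R S2) cov
  (mrestr mu mA1) (mscale r mu) (@Cyl_setI R S2) m1m2 m1goo A2 hA2.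
move=> h; rewrite setIC; transitivity (mscale r mu A2); first exact: h.
by rewrite /mscale /r /= fineK ?mu_fin//.
Qed.

Definition Lamu (rho row : nat -> nat) (n : nat) (u : Fn R) : R :=
  \big[Num.min/u (row n, 0%N)]_(j < rho n) u (row n, nat_of_ord j).
Definition EvO (rho row : nat -> nat) : set (Fn R) :=
  [set u | \sum_(0 <= n <oo) (Lamu rho row n u)%:E < +oo].

Lemma bigmin_meas S (i0 : nat * nat) k (c : nat -> nat * nat) : S i0 -> (forall j, S (c j)) ->
  measurable_fun (setT : set (OmS R S)) (fun u : Fn R => \big[Num.min/u i0]_(j < k) u (c j)).
Proof.
move=> h0; elim: k c => [|k IH] c hc.
  rewrite (_ : (fun _ => _) = (fun u : Fn R => u i0)); last first.
    by apply/funext => u; rewrite big_ord0.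
  exact: coord_meas.
rewrite (_ : (fun _ => _) = (fun u : Fn R => Num.min (u (c 0%N))
    (\big[Num.min/u i0]_(j < k) u (c j.+1)))); last first.
  by apply/funext => u; rewrite big_ord_recl.
have := measurable_minr (@coord_meas R S _ (hc 0%N)) (IH (fun j => c j.+1) (fun j => hc j.+1)).
apply: eq_measurable_fun => u _ /=; by [].
Qed.

Lemma EvO_meas S rho row : (forall n j, S (row n, j)) -> <<s Cyl R S >> (EvO rho row).
Proof.
move=> hS.
have := @ev_measurable _ (OmS R S) R (Lamu rho row) (fun n => @bigmin_meas S (row n, 0%N) (rho n) (fun j => (row n, j)) (hS n 0%N) (hS n)).
exact.
Qed.

Hypothesis hW : forall t, (0 <= W t)%R.

Definition G := [set w : T | forall ij, (0 <= X ij w)%R].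

Lemma measure_bigcup0 (F : nat -> set T) : (forall n, measurable (F n)) ->
  (forall n, P (F n) = 0) -> P (\bigcup_n F n) = 0.
Proof.
move=> mF h; apply/le_anti; rewrite measure_ge0 andbT.
apply: le_trans (@measure_sigma_subadditive_tail _ _ _ P _ F 0%N mF _ _) _.
- exact: bigcup_measurable.
- by move=> w [n _ Fn]; exists n.
- by rewrite eseries0 // => n _ _; exact: h.
Qed.

Lemma neg0 ij : P [set w | (X ij w < 0)%R] = 0.
Proof.
have -> : [set w | (X ij w < 0)%R] = (X ij : T -> R) @^-1` `]-oo, (@GRing.zero R)[.
  by apply/seteqP; split => w /=; rewrite in_itv.
rewrite hcopy; last exact: measurable_itv.
rewrite (_ : _ @^-1` _ = set0) ?measure0 //; apply/seteqP; split => t //=.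
by rewrite in_itv /= ltNge hW.
Qed.

Lemma nG_eq : ~` G = \bigcup_n \bigcup_m [set w | (X (n, m) w < 0)%R].
Proof.
apply/seteqP; split => w /=.
  move=> /existsNP[[n m]] /negP; rewrite -ltNge => h.
  by exists n => //; exists m.
by move=> [n _ [m _ h]] hG; move: (hG (n, m)); rewrite leNgt h.
Qed.

Lemma mnG_part n m : measurable [set w | (X (n, m) w < 0)%R].
Proof.
have -> : [set w | (X (n, m) w < 0)%R] = (X (n, m) : T -> R) @^-1` `]-oo, (@GRing.zero R)[.
  by apply/seteqP; split => w /=; rewrite in_itv.
by rewrite -[X in measurable X]setTI; apply: measurable_funP => //; exact: measurable_itv.
Qed.

Lemma mG : measurable G.
Proof.
rewrite -[G]setCK nG_eq; apply: measurableC.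
apply: bigcup_measurable => n _; apply: bigcup_measurable => m _; exact: mnG_part.
Qed.

Lemma PnG : P (~` G) = 0.
Proof.
rewrite nG_eq; apply: measure_bigcup0.
  by move=> n; apply: bigcup_measurable => m _; exact: mnG_part.
by move=> n; apply: measure_bigcup0 => m; [exact: mnG_part|exact: neg0].
Qed.

Lemma PGI F : measurable F -> P (F `&` G) = P F.
Proof.
move=> mF; rewrite [RHS](measureDI P mF mG).
rewrite -[LHS]add0e; congr (_ + _); apply/esym/le_anti; rewrite measure_ge0 andbT.
rewrite -PnG; apply: le_measure; rewrite ?inE.
- by apply: measurableD => //; exact: mG.
- by apply: measurableC; exact: mG.
- by move=> w [].
Qed.

Definition interA (A : nat -> set (Fn R)) m : set (Fn R) :=
  \bigcap_(r in [set r | (r < m)%N]) A r.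

Lemma interA0 A : interA A 0 = setT.
Proof. by apply/seteqP; split => // u _ r. Qed.

Lemma interAS A m : interA A m.+1 = interA A m `&` A m.
Proof.
apply/seteqP; split => u /=.
  by move=> h; split; [move=> r /= rm; exact: (h r (ltnW rm))|exact: (h m (ltnSn m))].
by move=> [h1 h2] r /=; rewrite ltnS leq_eqVlt => /orP[/eqP->//|]; exact: h1.
Qed.

Lemma sigma_mono S S' A : S `<=` S' -> <<s Cyl R S >> A -> <<s Cyl R S' >> A.
Proof. by move=> SS' h; exact: (sub_sigma_algebra2 (@Cyl_sub R S S' SS') h). Qed.

Lemma main_res (sigma : nat -> nat) (hpos : forall n, (0 < sigma n)%N)
  (hinc : {homo sigma : m n / (m <= n)%N >-> (m <= n)%N})
  (gamma : nat) (hgamma : (0 < gamma)%N) :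
  summable_for P (fun ij => (X ij : T -> R)) sigma <->
  summable_for P (fun ij => (X ij : T -> R)) (fun n => sigma (gamma * n)%N).
Proof.
pose tau := fun n => sigma (gamma * n)%N.
have EvE rho : [set w | \sum_(0 <= n <oo) (Lambda (fun ij => (X ij : T -> R)) rho n w)%:E < +oo]
  = Xe id @^-1` EvO rho id by [].
have mEvO rho : measurable (EvO rho id : set (Om R)).
  exact: (@EvO_meas setT rho id).
have mEv rho : measurable (Xe id @^-1` EvO rho id).
  by have := Xe_meas id setT measurableT _ (mEvO rho); rewrite setTI.
rewrite /summable_for !EvE.
split => hp.
- apply: lt_le_trans hp _; rewrite -PGI //; apply: le_measure; rewrite ?inE.
  + by apply: measurableI => //; exact: mG.
  + exact: mEv.
  move=> w [hw hG]; rewrite /= in hw *; apply: le_lt_trans hw.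
  apply: lee_nneseries => [n _ _|n _].
    rewrite lee_fin; apply: (@bigmin_ge0 R _ _ (fun j => (X (n, j) : T -> R) w)) => [|j]; exact: hG.
  rewrite lee_fin; apply: (@bigmin_le R _ _ (fun j => (X (n, j) : T -> R) w)).
  apply: hinc; exact: leq_pmull.
pose row r k := (gamma * k + r)%N.
pose A r := EvO tau (row r).
pose Sr r := [set ij : nat * nat | (ij.1 %% gamma)%N = r].
pose Slt m := [set ij : nat * nat | (ij.1 %% gamma < m)%N].
have rowmod r k : (r < gamma)%N -> ((row r k) %% gamma)%N = r.
  by move=> rg; rewrite /row mulnC modnMDl modn_small.
have hA r : (r < gamma)%N -> <<s Cyl R (Sr r) >> (A r).
  by move=> rg; apply: EvO_meas => n j; rewrite /Sr /= rowmod.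
have pA r : (r < gamma)%N -> mu (A r) = P (Xe id @^-1` EvO tau id).
  move=> rg; rewrite muE.
  have -> : Xe id @^-1` A r = Xe (fun ij => (row r ij.1, ij.2)) @^-1` EvO tau id by [].
  apply: law_eq; last exact: mEvO.
  move=> [k j] [k' j'] /= [] /addIn /eqP; rewrite eqn_mul2l gt_eqF //= => /eqP -> ->.
  by [].
have key m : (m <= gamma)%N -> <<s Cyl R (Slt m) >> (interA A m) /\ 0 < mu (interA A m).
  elim: m => [_|m IH hm].
    rewrite interA0; split; first by apply: sub_sigma_algebra; exact: Cyl_T.
    by rewrite muE preimage_setT probability_setT lte01.
  have [h1 h2] := IH (ltnW hm).
  rewrite interAS; split.
    have l1 := @sigma_mono (Slt m) (Slt m.+1) _ (fun ij (h : (ij.1 %% gamma < m)%N) => ltnW h : (ij.1 %% gamma < m.+1)%N) h1.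
    have l2 := @sigma_mono (Sr m) (Slt m.+1) _ (fun ij (h : (ij.1 %% gamma)%N = m) => (eq_leq h : (ij.1 %% gamma < m.+1)%N)) (hA m hm).
    exact: (@measurableI _ (OmS R (Slt m.+1)) _ _ l1 l2).
  rewrite (@indep (Slt m) (Sr m) _ _ _ h1 (hA m hm)).
    by rewrite mule_gt0 // pA.
  by move=> ij; rewrite /Slt /Sr /= => lt eq; rewrite eq ltnn in lt.
have [hI pI] := key gamma (leqnn _).
apply: lt_le_trans pI _; rewrite muE -PGI; last first.
  by have := Xe_meas id setT measurableT _ (@sub_Om (Slt gamma) _ hI); rewrite setTI.
apply: le_measure; rewrite ?inE.
- apply: measurableI; last exact: mG.
  by have := Xe_meas id setT measurableT _ (@sub_Om (Slt gamma) _ hI); rewrite setTI.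
- exact: mEv.
move=> w [hw hG] /=.
apply: (@sum_blocks R (fun n => Lamu sigma id n (Xe id w))
  (fun r k => Lamu tau (row r) k (Xe id w)) gamma hgamma).
- move=> n; apply: (@bigmin_ge0 R _ _ (fun j => (X (n, j) : T -> R) w)) => [|j]; exact: hG.
- move=> r k; apply: (@bigmin_ge0 R _ _ (fun j => (X (row r k, j) : T -> R) w)) => [|j]; exact: hG.
- move=> n; rewrite /Lamu /row (_ : (gamma * (n %/ gamma) + n %% gamma)%N = n); last first.
    by rewrite mulnC -divn_eq.
  apply: (@bigmin_le R _ _ (fun j => (X (n, j) : T -> R) w)).
  apply: hinc; rewrite mulnC; exact: leq_trunc_div.
- by move=> r rg; exact: (hw r rg).
Qed.

End main.

Local Close Scope ereal_scope.

Theorem lemma2p1 (R : realType)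
  (d' : measure_display) (T' : measurableType d') (Q : probability T' R)
  (W : {RV Q >-> R}) (hW : forall t, 0 <= W t)
  (d : measure_display) (T : measurableType d) (P : probability T R)
  (X : nat * nat -> {RV P >-> R})
  (hind : mutually_independent P (fun ij => (X ij : T -> R)))
  (hcopy : forall ij, same_distribution P Q (X ij) W)
  (sigma : nat -> nat) (hpos : forall n, (0 < sigma n)%N)
  (hinc : {homo sigma : m n / (m <= n)%N >-> (m <= n)%N})
  (gamma : nat) (hgamma : (0 < gamma)%N) :
  summable_for P (fun ij => (X ij : T -> R)) sigma <->
  summable_for P (fun ij => (X ij : T -> R)) (fun n => sigma (gamma * n)%N).
Proof.
exact: (@main_res R d' T' Q W d T P X hind hcopy hW sigma hpos hinc gamma hgamma).
Qed.
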